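(* Fix an epoch $\ell$ of the UCB-like policy described in the context and suppose that for every $S\subseteq\mathcal N$ and every $b\in(0,1)^N$, with $B(S\mid v)=\sum_{i\in S}b(i)\varphi(i,S\mid v)$, $$B(S\mid\hat v^\ell)-\sum_{i\in S}b(i)\varepsilon(n_i^{\ell-1})\le B(S\mid v^* )\le B(S\mid\hat v^\ell)+\sum_{i\in S}b(i)\varepsilon(n_i^{\ell-1}).$$ Then $OPT(\text{UCB-LP}(\hat v^\ell,n^{\ell-1},\omega))\ge(1-\omega)\,OPT(LP(v^* ))$.
   Context: $N$ products $\mathcal N=\{1,\dots,N\}$, $K$ resources $\mathcal K$; revenues $r(i)\in[0,1]$, consumptions $a(i,k)\in[0,1]$, $c(k)>0$. MNL probabilities: $\varphi(i,S\mid v)=v_i/(1+\sum_{j\in S}v_j)$ for $i\in S\subseteq\mathcal N$, $v\in\mathbb R_{>0}^N$. $v^*$ is the true preference vector. $LP(v)$: maximize $\sum_{S\subseteq\mathcal N}\sum_{i\in S}r(i)\varphi(i,S\mid v)y(S)$ subject to $\sum_S\sum_{i\in S}a(i,k)\varphi(i,S\mid v)y(S)\le c(k)$ for all $k$, $\sum_S y(S)=1$, $y\ge0$ (the sum over $S$ includes $S=\emptyset$); $OPT(\cdot)$ denotes an optimal value. In epoch $\ell$ of the policy, $\hat v^\ell\in\mathbb R_{>0}^N$ is the current MLE, $n_i^{\ell-1}\ge1$ is the number of past periods in which product $i$ was offered, $\varepsilon(n)=(\sqrt N+1)\Psi/\sqrt n$ for a constant $\Psi>0$, and $\omega\in[0,1]$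 is a tightening parameter. UCB-LP$(\hat v^\ell,n^{\ell-1},\omega)$: maximize $\sum_S\sum_{i\in S}r(i)\big(\varphi(i,S\mid\hat v^\ell)+\varepsilon(n_i^{\ell-1})\big)y(S)$ subject to $\sum_S\sum_{i\in S}a(i,k)\big(\varphi(i,S\mid\hat v^\ell)-\varepsilon(n_i^{\ell-1})\big)y(S)\le(1-\omega)c(k)$ for all $k$, $\sum_S y(S)=1$, $y\ge0$. *)

(* Defs.v *)
From HB Require Import structures.
From mathcomp Require Import all_boot all_order all_algebra.
From mathcomp Require Import boolp classical_sets reals.
Set Implicit Arguments. Unset Strict Implicit. Unset Printing Implicit Defensive.
Import Order.TTheory GRing.Theory Num.Theory.
Local Open Scope ring_scope.
Local Open Scope classical_set_scope.

(* Products are 'I_N, resources are 'I_K, assortments are S : {set 'I_N},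
   LP variables are functions y : {set 'I_N} -> R (y ranges over ALL subsets,
   including the empty set). *)

Section Defs.
Variables (R : realType) (N K : nat).

Definition mnl (v : 'I_N -> R) (i : 'I_N) (S : {set 'I_N}) : R :=
  v i / (1 + \sum_(j in S) v j).

Definition conf_eps (Psi : R) (n : nat) : R :=
  (Num.sqrt (N%:R) + 1) * Psi / Num.sqrt (n%:R).

Definition Bval (b : 'I_N -> R) (S : {set 'I_N}) (v : 'I_N -> R) : R :=
  \sum_(i in S) b i * mnl v i S.

Definition LP_obj (r : 'I_N -> R) (v : 'I_N -> R) (y : {set 'I_N} -> R) : R :=
  \sum_(S : {set 'I_N}) \sum_(i in S) r i * mnl v i S * y S.

Definition LP_feasible (a : 'I_N -> 'I_K -> R) (c : 'I_K -> R)
  (v : 'I_N -> R) (y : {set 'I_N} -> R) : Prop :=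
  [/\ forall k : 'I_K,
        \sum_(S : {set 'I_N}) \sum_(i in S) a i k * mnl v i S * y S <= c k,
      \sum_(S : {set 'I_N}) y S = 1
    & forall S, 0 <= y S].

Definition OPT_LP r a c v : R :=
  sup [set LP_obj r v y | y in LP_feasible a c v].

Definition UCB_obj (Psi : R) (r : 'I_N -> R) (vhat : 'I_N -> R) (n : 'I_N -> nat)
  (y : {set 'I_N} -> R) : R :=
  \sum_(S : {set 'I_N}) \sum_(i in S)
     r i * (mnl vhat i S + conf_eps Psi (n i)) * y S.

Definition UCB_feasible (Psi : R) (a : 'I_N -> 'I_K -> R) (c : 'I_K -> R)
  (vhat : 'I_N -> R) (n : 'I_N -> nat) (omega : R) (y : {set 'I_N} -> R) : Prop :=
  [/\ forall k : 'I_K,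
        \sum_(S : {set 'I_N}) \sum_(i in S)
           a i k * (mnl vhat i S - conf_eps Psi (n i)) * y S <= (1 - omega) * c k,
      \sum_(S : {set 'I_N}) y S = 1
    & forall S, 0 <= y S].

Definition OPT_UCB Psi r a c vhat n omega : R :=
  sup [set UCB_obj Psi r vhat n y | y in UCB_feasible Psi a c vhat n omega].

End Defs.

(* Main.v *)
Require Import Defs.
From HB Require Import structures.
From mathcomp Require Import all_boot all_order all_algebra.
From mathcomp Require Import boolp classical_sets reals.
From mathcomp Require Import ring lra.
Import Order.TTheory GRing.Theory Num.Theory.
Local Open Scope ring_scope.

Lemma ext_closed (R : realType) (N : nat) (S : {set 'I_N}) (d : 'I_N -> R) :
  (forall b : 'I_N -> R, (forall i, 0 < b i < 1) -> \sum_(i in S) b i * d i <= 0) ->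
  forall b : 'I_N -> R, (forall i, 0 <= b i <= 1) -> \sum_(i in S) b i * d i <= 0.
Proof.
move=> H b hb; rewrite leNgt; apply/negP => Dpos.
set D := \sum_(i in S) b i * d i in Dpos.
set Hh := \sum_(i in S) (1/2 : R) * d i.
set s := D + `|Hh|.
have spos : 0 < s by rewrite /s; have := normr_ge0 Hh; lra.
set t := D / (2 * s).
have ts : t * s = D / 2 by rewrite /t; field; lra.
have t0 : 0 < t by rewrite /t divr_gt0 //; lra.
have t1 : t <= 1/2.
  rewrite /t ler_pdivrMr; last lra.
  have := normr_ge0 Hh; rewrite /s; lra.
pose bt i := (1 - t) * b i + t * (1/2).
have hbt : forall i, 0 < bt i < 1.
  move=> i; have := hb i; rewrite /bt => /andP[h0 h1].
  have : 0 <= (1 - t) * b i by apply: mulr_ge0; lra.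
  have : (1 - t) * b i <= 1 - t by rewrite ler_piMr //; lra.
  move=> ? ?; apply/andP; split; lra.
have := H bt hbt.
have -> : \sum_(i in S) bt i * d i = (1 - t) * D + t * Hh.
  rewrite /D /Hh !mulr_sumr -big_split /=; apply eq_bigr => i _; rewrite /bt; ring.
have : - `|Hh| <= Hh by rewrite lerNnormlW.
move=> hH.
have : t * (- `|Hh|) <= t * Hh by rewrite ler_pM2l.
move=> htH.
have : (1 - t) * D + t * (- `|Hh|) = D - t * s.
  rewrite /s; clearbody t; ring.
lra.
Qed.

Lemma sum_empty_or (R : realType) (N : nat) (S : {set 'I_N}) (f : 'I_N -> R) (y y' : R) (om : R) :
  (S != finset.set0 -> y' = (1 - om) * y) ->
  \sum_(i in S) f i * y' = (1 - om) * \sum_(i in S) f i * y.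
Proof.
move=> h; case: (eqVneq S finset.set0) => [->|hS]; first by rewrite !big_set0 mulr0.
rewrite (h hS) mulr_sumr; apply eq_bigr => i _; ring.
Qed.

Theorem lemma4 (R : realType) (N K : nat)
  (r : 'I_N -> R) (a : 'I_N -> 'I_K -> R) (c : 'I_K -> R)
  (vstar vhat : 'I_N -> R) (n : 'I_N -> nat) (Psi omega : R) :
  (forall i, 0 <= r i <= 1) ->
  (forall i k, 0 <= a i k <= 1) ->
  (forall k, 0 < c k) ->
  (forall i, 0 < vstar i) ->
  (forall i, 0 < vhat i) ->
  (forall i, (1 <= n i)%N) ->
  0 < Psi ->
  0 <= omega <= 1 ->
  (forall (S : {set 'I_N}) (b : 'I_N -> R), (forall i, 0 < b i < 1) ->
     Bval b S vhat - \sum_(i in S) b i * conf_eps N Psi (n i) <= Bval b S vstar /\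
     Bval b S vstar <= Bval b S vhat + \sum_(i in S) b i * conf_eps N Psi (n i)) ->
  OPT_UCB Psi r a c vhat n omega >= (1 - omega) * OPT_LP r a c vstar.
Proof.
move=> hr ha hc hvs hvh hn hPsi /andP[om0 om1] Hyp.
set e := fun i => conf_eps N Psi (n i).
have low : forall (S : {set 'I_N}) (b : 'I_N -> R), (forall i, 0 <= b i <= 1) ->
    \sum_(i in S) b i * (mnl vhat i S - e i - mnl vstar i S) <= 0.
  move=> S; apply: ext_closed => b hb.
  have [h1 _] := Hyp S b hb.
  have -> : \sum_(i in S) b i * (mnl vhat i S - e i - mnl vstar i S) =
     Bval b S vhat - \sum_(i in S) b i * conf_eps N Psi (n i) - Bval b S vstar.
    rewrite /Bval -!sumrB; apply eq_bigr => i _; rewrite /e; ring.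
  lra.
have upp : forall (S : {set 'I_N}) (b : 'I_N -> R), (forall i, 0 <= b i <= 1) ->
    \sum_(i in S) b i * (mnl vstar i S - mnl vhat i S - e i) <= 0.
  move=> S; apply: ext_closed => b hb.
  have [_ h2] := Hyp S b hb.
  have -> : \sum_(i in S) b i * (mnl vstar i S - mnl vhat i S - e i) =
     Bval b S vstar - Bval b S vhat - \sum_(i in S) b i * conf_eps N Psi (n i).
    rewrite /Bval -!sumrB; apply eq_bigr => i _; rewrite /e; ring.
  lra.
rewrite /OPT_UCB /OPT_LP.
set F := (X in _ <= sup X).
set E := (X in _ * sup X <= _).
pose y0 := fun S : {set 'I_N} => if S == finset.set0 then (1 : R) else 0.
have sy0 : \sum_(S : {set 'I_N}) y0 S = 1.
  rewrite (bigD1 finset.set0) //= /y0 eqxx big1 ?addr0 // => S /negbTE ->; done.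
have z0 : forall (f : 'I_N -> {set 'I_N} -> R),
    \sum_(S : {set 'I_N}) \sum_(i in S) f i S * y0 S = 0.
  move=> f; rewrite big1 // => S _; rewrite /y0; case: eqP => [->|_].
    by rewrite big_set0.
  by rewrite big1 // => i _; rewrite mulr0.
have F0 : F 0.
  exists y0; last by rewrite /UCB_obj z0.
  split => //.
  - move=> k; rewrite z0; apply mulr_ge0; [lra | exact: ltW].
  - by move=> S; rewrite /y0; case: eqP.
have Fub : ubound F (\sum_(S : {set 'I_N}) \sum_(i in S)
                      `|r i * (mnl vhat i S + e i)|).
  move=> x [y [_ sy yp] <-]; rewrite /UCB_obj; apply ler_sum => S _.
  apply ler_sum => i _.
  have y1 : y S <= 1.
    rewrite -sy (bigD1 S) //= lerDl; apply sumr_ge0 => T _; exact: yp.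
  apply: (le_trans (ler_norm _)); rewrite normrM (ger0_norm (yp S)).
  by rewrite ler_piMr // /e.
have hsF : has_sup F by split; [exists 0 | eexists; exact Fub].
have key : forall y, LP_feasible a c vstar y ->
    (1 - omega) * LP_obj r vstar y <= sup F.
  move=> y [hk sy yp].
  pose y' := fun S : {set 'I_N} => (1 - omega) * y S + (if S == finset.set0 then omega else 0).
  have hy' : forall S : {set 'I_N}, S != finset.set0 -> y' S = (1 - omega) * y S.
    by move=> S /negbTE hS; rewrite /y' hS addr0.
  have feas : UCB_feasible Psi a c vhat n omega y'.
    split.
    - move=> k.
      under eq_bigr => S _ do rewrite (@sum_empty_or R N S (fun i => a i k * (mnl vhat i S - conf_eps N Psi (n i))) _ _ _ (hy' S)).
      rewrite -mulr_sumr ler_wpM2l //; first lra.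
      apply: le_trans (hk k); apply ler_sum => S _.
      rewrite -subr_ge0 -sumrB.
      have -> : \sum_(i in S) (a i k * mnl vstar i S * y S -
                a i k * (mnl vhat i S - conf_eps N Psi (n i)) * y S) =
              - (y S * \sum_(i in S) a i k * (mnl vhat i S - e i - mnl vstar i S)).
        rewrite mulr_sumr -sumrN; apply eq_bigr => i _; rewrite /e; ring.
      rewrite oppr_ge0; apply: mulr_ge0_le0 => //; apply low => i; exact: ha.
    - rewrite /y' big_split /= -mulr_sumr sy (bigD1 finset.set0) //= eqxx big1 ?addr0.
        ring.
      by move=> S /negbTE ->.
    - move=> S; rewrite /y'; apply addr_ge0; first by apply mulr_ge0 => //; lra.
      by case: eqP.
  have : F (UCB_obj Psi r vhat n y') by exists y'.
  move/(sup_upper_bound hsF); apply: le_trans.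
  rewrite /UCB_obj /LP_obj.
  under [X in _ <= X]eq_bigr => S _ do rewrite (@sum_empty_or R N S (fun i => r i * (mnl vhat i S + conf_eps N Psi (n i))) _ _ _ (hy' S)).
  rewrite -mulr_sumr ler_wpM2l //; first lra.
  apply ler_sum => S _.
  rewrite -subr_ge0 -sumrB.
  have -> : \sum_(i in S) (r i * (mnl vhat i S + conf_eps N Psi (n i)) * y S -
                r i * mnl vstar i S * y S) =
              - (y S * \sum_(i in S) r i * (mnl vstar i S - mnl vhat i S - e i)).
    rewrite mulr_sumr -sumrN; apply eq_bigr => i _; rewrite /e; ring.
  rewrite oppr_ge0; apply: mulr_ge0_le0 => //; apply upp => i; exact: hr.
have supF0 : 0 <= sup F by exact: sup_upper_bound hsF _ F0.
have [om1'|om1'] := eqVneq omega 1.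
  by rewrite om1' subrr mul0r.
have pos : 0 < 1 - omega by rewrite subr_gt0 lt_neqAle om1' om1.
have E0 : (E !=set0)%classic.
  exists 0; exists y0; last by rewrite /LP_obj z0.
  split => //.
  - by move=> k; rewrite z0; exact: ltW.
  - by move=> S; rewrite /y0; case: eqP.
rewrite -ler_pdivlMl //.
apply: ge_sup => // x [y hy <-].
rewrite ler_pdivlMl //; exact: key.
Qed.
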